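(* Let $C\ge0$. There is a constant $c(C)$ depending only on $C$ such that the following holds. Let $d,N\ge0$, let $0\neq H\in V_N$ and write $H=z^\nu(h_0+h_1z+\cdots+h_Rz^R)$ with $h_0h_R\ne0$, and assume $R\le 4d/3+C$. Consider the linear map \[ L_H:\mathcal R_d\to\mathbb F_q^{N+1},\qquad T\mapsto\bigl([z^{d+j}]\,T(z)H(z)\bigr)_{0\le j\le N}. \] Then $\operatorname{rank}L_H\ge R/4-c(C)$.
   Context: $V_N$ is the space of polynomials in $\mathbb F_q[z]$ of degree $\le N$; $[z^j]F$ is the coefficient of $z^j$ in $F$. For $d\ge0$, $\mathcal R_d=\{T(z)=\sum_{s=0}^{2d}T_sz^s\in\mathbb F_q[z]: T_s=T_{2d-s}\text{ for all }s\}$, the $(d+1)$-dimensional space of reciprocal polynomials with centre $d$. *)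

(* Defs.v *)
From HB Require Import structures.
From mathcomp Require Import all_boot all_order all_algebra.
Set Implicit Arguments. Unset Strict Implicit. Unset Printing Implicit Defensive.
Import Order.TTheory GRing.Theory Num.Theory.
Local Open Scope ring_scope.

Definition reciprocal (F : fieldType) (d : nat) (T : {poly F}) : bool :=
  (size T <= (2 * d).+1)%N && [forall s : 'I_((2 * d).+1), T`_s == T`_(2 * d - s)].

Definition recip_basis (F : fieldType) (d : nat) (k : 'I_d.+1) : {poly F} :=
  if (k == d :> nat) then 'X^d else 'X^k + 'X^(2 * d - k).

Definition LH (F : fieldType) (d N : nat) (H T : {poly F}) : 'rV[F]_N.+1 :=
  \row_(j < N.+1) (T * H)`_(d + j).

(* rank of L_H : R_d -> F^(N+1): rank of its matrix w.r.t. the basis above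
   (rows are the images of the basis vectors). *)
Definition rank_LH (F : fieldType) (d N : nat) (H : {poly F}) : nat :=
  \rank (\matrix_(k < d.+1, j < N.+1) (@LH F d N H (@recip_basis F d k)) ord0 j).

(* Main.v *)
Require Import Defs.
From HB Require Import structures.
From mathcomp Require Import all_boot all_order all_algebra.
From mathcomp Require Import zify ring lra.
Import Order.TTheory GRing.Theory Num.Theory.
Local Open Scope ring_scope.

Lemma rank_sub_le (F : fieldType) m n m' n' (f : 'I_m' -> 'I_m) (g : 'I_n' -> 'I_n)
  (M : 'M[F]_(m, n)) : (\rank (rowsub f (colsub g M)) <= \rank M)%N.
Proof.
rewrite rowsubE; apply: leq_trans (mxrankM_maxr _ _) _.
have -> : colsub g M = M *m colsub g 1%:M by rewrite mulmx_colsub mulmx1.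
exact: mxrankM_maxl.
Qed.

Theorem lemma6p1 :
  forall C : rat, 0 <= C ->
  exists c : rat,
  forall (F : finFieldType) (d N nu : nat) (H h : {poly F}),
    H != 0 -> (size H <= N.+1)%N ->
    H = 'X^nu * h -> h`_0 != 0 ->
    ((size h).-1)%:R <= 4%:R * d%:R / 3%:R + C ->
    ((size h).-1)%:R / 4%:R - c <= (@rank_LH F d N H)%:R.
Proof.
move=> C C0; exists C => F d N nu H h H0 HN eH h0 hR.
move: hR; set R := (size h).-1 => hR.
have hnz : h != 0 by apply: contra h0 => /eqP ->; rewrite coef0.
have sh : size h = R.+1 by rewrite /R prednK // size_poly_gt0.
have sH : size H = (nu + R).+1 by rewrite eH mulrC size_mulXn // sh addnS.
have Hlow n : (n < nu)%N -> H`_n = 0 by move=> hn; rewrite eH coefXnM hn.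
have Hhigh n : (nu + R < n)%N -> H`_n = 0.
  by move=> hn; rewrite nth_default // sH.
have Hlead : H`_(nu + R) != 0.
  by move: H0; rewrite -lead_coef_eq0 lead_coefE sH.
set hh := R./2.
have hr : (R < 2 * hh.+1)%N.
  by rewrite /hh -divn2; lia.
set mn := minn d (nu + R).
set mm := (mn - hh)%N.
have mnd : (mn <= d)%N by rewrite /mn geq_minl.
have mnR : (mn <= nu + R)%N by rewrite /mn geq_minr.
have key : (mm <= rank_LH d N H)%N.
  rewrite /rank_LH.
  set Mx := \matrix_(k < d.+1, j < N.+1) _.
  have bt (t : 'I_mm) : (hh.+1 + t <= mn)%N by have := ltn_ord t; rewrite /mm; lia.
  pose f (t : 'I_mm) : 'I_d.+1 := inord (d - (hh.+1 + t)).
  pose g (t : 'I_mm) : 'I_N.+1 := inord (nu + R - (hh.+1 + t)).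
  have HNs : (nu + R <= N)%N by move: HN; rewrite sH.
  have Bent (t t' : 'I_mm) : (rowsub f (colsub g Mx)) t t' =
      H`_(nu + R - (hh.+1 + t') + (hh.+1 + t)).
    have b1 := bt t; have b2 := bt t'.
    rewrite !mxE /recip_basis /f /g !inordK; try lia.
    have -> : ((d - (hh.+1 + t))%N == d) = false by apply/eqP; lia.
    rewrite mulrDl coefD !coefXnM.
    have -> : (d + (nu + R - (hh.+1 + t')) < d - (hh.+1 + t))%N = false by lia.
    have -> : (d + (nu + R - (hh.+1 + t')) - (d - (hh.+1 + t)) =
               nu + R - (hh.+1 + t') + (hh.+1 + t))%N by lia.
    case: ifP => [_|/negbT]; first by rewrite addr0.
    rewrite -leqNgt => lt; rewrite [X in _ + X]Hlow ?addr0 //; lia.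
  have tri : is_trig_mx (rowsub f (colsub g Mx))^T.
    apply/is_trig_mxP => i j ij; rewrite mxE Bent Hhigh //.
    have := bt i; lia.
  have unit : rowsub f (colsub g Mx) \in unitmx.
    rewrite unitmxE -det_tr det_trig // unitfE; apply/prodf_neq0 => i _.
    rewrite mxE Bent.
    have -> : (nu + R - (hh.+1 + i) + (hh.+1 + i) = nu + R)%N.
      by have := bt i; lia.
    exact: Hlead.
  by rewrite -(mxrank_unit unit); apply: rank_sub_le.
have key' : (mn <= mm + hh)%N by rewrite /mm; lia.
have hh2 : (2 * hh <= R)%N by rewrite /hh -divn2; lia.
have mncase : mn = d \/ mn = (nu + R)%N by rewrite /mn /minn; case: ifP; auto.
have Q1 : (mn%:R : rat) <= mm%:R + hh%:R by rewrite -natrD ler_nat.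
have Q2 : (2%:R * hh%:R : rat) <= R%:R by rewrite -natrM ler_nat.
have Q3 : (mm%:R : rat) <= (rank_LH d N H)%:R by rewrite ler_nat.
have Q4 : (mn%:R : rat) <= d%:R by rewrite ler_nat.
have Q0 : (0 : rat) <= mm%:R by [].
case: mncase => E.
  have Q5 : (mn%:R : rat) = d%:R by rewrite E.
  lra.
have Q5 : (mn%:R : rat) = nu%:R + R%:R by rewrite E natrD.
have Q6 : (0 : rat) <= nu%:R by [].
lra.
Qed.
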